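(* Let $(A,B)$ be a $B$-irreducible odd-symmetric non-simple associative superalgebra such that $A_{\bar{0}}$ is a semi-simple associative algebra. Then $A\cong S\oplus P(S^* )$ is the semi-direct product of a simple associative algebra $S$ by $P(S^* )$ by means of $(L^*,R^* )$.
   Context: $\mathbb{K}$ algebraically closed of characteristic zero; finite dimensional associative superalgebras $A=A_{\bar{0}}\oplus A_{\bar{1}}$. An odd-symmetric structure is an odd (i.e. $B(A_{\bar{0}},A_{\bar{0}})=B(A_{\bar{1}},A_{\bar{1}})=\{0\}$), supersymmetric, associative ($B(xy,z)=B(x,yz)$), non-degenerate bilinear form $B$. $(A,B)$ is $B$-irreducible if $A$ contains no non-degenerate graded two-sided ideal other than $\{0\}$ and $A$. For an associative algebra $S$, $P(S^* )$ is the graded space with $P(S^* )_{\bar{0}}=\{0\}$, $P(S^* )_{\bar{1}}=S^*$; the semi-direct product $S\oplus P(S^* )$ has product $(x+f)(y+h)=xy+h\circ R_x+f\circ L_y$ ($L,R$ left/right multiplications in $S$, i.e. $L^*(x)(h)=h\circ R_x$, $R^*(y)(f)=f\circ L_y$) and odd-symmetric form $\widetilde{B}(f,x)=\widetilde{B}(x,f)=f(x)$, $\widetilde{B}(S,S)=\widetilde{B}(P(S^* ),P(S^* ))=\{0\}$. *)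

(* Defs.v *)
From HB Require Import structures.
From mathcomp Require Import all_boot all_order all_algebra.
Set Implicit Arguments. Unset Strict Implicit. Unset Printing Implicit Defensive.
Import GRing.Theory.
Local Open Scope ring_scope.

Section SuperDefs.
Variable K : fieldType.

Definition bilin_map (V : vectType K) (m : V -> V -> V) :=
  forall (a : K) (x y z : V),
    m (a *: x + y) z = a *: m x z + m y z /\ m z (a *: x + y) = a *: m z x + m z y.

Definition bilin_form (V : vectType K) (B : V -> V -> K) :=
  forall (a : K) (x y z : V),
    B (a *: x + y) z = a * B x z + B y z /\ B z (a *: x + y) = a * B z x + B z y.

(* homogeneous component of degree b (false = even, true = odd) *)
Definition homog (V : vectType K) (A0 A1 : {vspace V}) (b : bool) :=
  if b then A1 else A0.

Definition assoc_superalgebra (V : vectType K) (m : V -> V -> V)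
    (A0 A1 : {vspace V}) :=
  [/\ bilin_map m, directv (A0 + A1), (A0 + A1)%VS = fullv,
      (forall (b c : bool) (x y : V), x \in homog A0 A1 b -> y \in homog A0 A1 c ->
          m x y \in homog A0 A1 (b (+) c))
    & (forall x y z : V, m (m x y) z = m x (m y z))].

Definition graded_ideal (V : vectType K) (m : V -> V -> V) (A0 A1 : {vspace V})
    (I : {vspace V}) :=
  I = (I :&: A0 + I :&: A1)%VS /\
  (forall x y : V, y \in I -> m x y \in I /\ m y x \in I).

Definition super_simple (V : vectType K) (m : V -> V -> V) (A0 A1 : {vspace V}) :=
  (exists x y : V, m x y != 0) /\
  (forall I : {vspace V}, graded_ideal m A0 A1 I -> I = 0%VS \/ I = fullv).

(* odd-symmetric structure: odd, supersymmetric, associative, non-degenerate *)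
Definition odd_symmetric (V : vectType K) (m : V -> V -> V) (A0 A1 : {vspace V})
    (B : V -> V -> K) :=
  [/\ bilin_form B,
      ((forall x y : V, x \in A0 -> y \in A0 -> B x y = 0) /\
       (forall x y : V, x \in A1 -> y \in A1 -> B x y = 0)),
      (forall (b c : bool) (x y : V), x \in homog A0 A1 b -> y \in homog A0 A1 c ->
          B x y = (-1) ^+ (b && c) * B y x),
      (forall x y z : V, B (m x y) z = B x (m y z))
    & (forall x : V, (forall y : V, B x y = 0) -> x = 0)].

Definition nondeg_on (V : vectType K) (B : V -> V -> K) (I : {vspace V}) :=
  forall x : V, x \in I -> (forall y : V, y \in I -> B x y = 0) -> x = 0.

Definition B_irreducible (V : vectType K) (m : V -> V -> V) (A0 A1 : {vspace V})
    (B : V -> V -> K) :=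
  forall I : {vspace V}, graded_ideal m A0 A1 I -> nondeg_on B I ->
    I = 0%VS \/ I = fullv.

Definition ideal_in (V : vectType K) (m : V -> V -> V) (U J : {vspace V}) :=
  (J <= U)%VS /\
  (forall x y : V, x \in U -> y \in J -> m x y \in J /\ m y x \in J).

Definition nilpotent_sp (V : vectType K) (m : V -> V -> V) (J : {vspace V}) :=
  exists n : nat, forall (x : V) (s : seq V), x \in J -> all (fun y => y \in J) s ->
    size s = n -> foldl m x s = 0.

(* U is a subalgebra which is a semi-simple associative algebra
   (no non-zero nilpotent two-sided ideal, i.e. zero radical) *)
Definition semisimple_sub (V : vectType K) (m : V -> V -> V) (U : {vspace V}) :=
  (forall x y : V, x \in U -> y \in U -> m x y \in U) /\
  (forall J : {vspace V}, ideal_in m U J -> nilpotent_sp m J -> J = 0%VS).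

Definition simple_assoc_alg (W : vectType K) (m : W -> W -> W) :=
  [/\ bilin_map m, (forall x y z : W, m (m x y) z = m x (m y z)),
      (exists x y : W, m x y != 0)
    & (forall J : {vspace W}, ideal_in m fullv J -> J = 0%VS \/ J = fullv)].

(* the semi-direct product S (+) P(S^* ), with S^* = 'Hom(S, K) :
   (x + f)(y + h) = xy + h o R_x + f o L_y *)
Definition sd_mul (W : vectType K) (m : W -> W -> W)
    (u v : W * 'Hom(W, K^o)) : W * 'Hom(W, K^o) :=
  (m u.1 v.1, linfun (fun z : W => (v.2 (m z u.1) + u.2 (m v.1 z) : K^o))).

End SuperDefs.

(* Main.v *)
Require Import Defs.
From HB Require Import structures.
From mathcomp Require Import all_boot all_order all_algebra.
From mathcomp Require Import zify.
Import GRing.Theory.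
Local Open Scope ring_scope.

Lemma lfunE_gen (K : fieldType) (aT rT : vectType K) (f : aT -> rT) :
  linear f -> forall x, linfun f x = f x.
Proof.
move=> fL x.
pose F : {linear aT -> rT} := HB.pack f (GRing.isLinear.Build K aT rT *:%R f fL).
exact: (lfunE F x).
Qed.

Section Main.
Variables (K : fieldType) (V : vectType K) (mul : V -> V -> V)
  (A0 A1 : {vspace V}) (B : V -> V -> K).
Hypothesis hA : assoc_superalgebra mul A0 A1.
Hypothesis hB : odd_symmetric mul A0 A1 B.

Local Notation "x ∙ y" := (mul x y) (at level 40, left associativity).

Lemma mul_lin : bilin_map mul. Proof. by case: hA. Qed.
Lemma mulA x y z : (x ∙ y) ∙ z = x ∙ (y ∙ z). Proof. by case: hA. Qed.

Lemma mul0l z : 0 ∙ z = 0.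
Proof.
have := (mul_lin 1 0 0 z).1; rewrite !scale1r addr0 => H.
by apply: (addrI (0 ∙ z)); rewrite addr0 -H.
Qed.
Lemma mul0r z : z ∙ 0 = 0.
Proof.
have := (mul_lin 1 0 0 z).2; rewrite !scale1r addr0 => H.
by apply: (addrI (z ∙ 0)); rewrite addr0 -H.
Qed.
Lemma mulDl x y z : (x + y) ∙ z = x ∙ z + y ∙ z.
Proof. by have := (mul_lin 1 x y z).1; rewrite !scale1r. Qed.
Lemma mulDr x y z : z ∙ (x + y) = z ∙ x + z ∙ y.
Proof. by have := (mul_lin 1 x y z).2; rewrite !scale1r. Qed.
Lemma mulZl a x z : (a *: x) ∙ z = a *: (x ∙ z).
Proof. by have := (mul_lin a x 0 z).1; rewrite !addr0 mul0l addr0. Qed.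
Lemma mulZr a x z : z ∙ (a *: x) = a *: (z ∙ x).
Proof. by have := (mul_lin a x 0 z).2; rewrite !addr0 mul0r addr0. Qed.
Lemma mulNl x z : (- x) ∙ z = - (x ∙ z).
Proof. by rewrite -scaleN1r mulZl scaleN1r. Qed.
Lemma mulNr x z : z ∙ (- x) = - (z ∙ x).
Proof. by rewrite -scaleN1r mulZr scaleN1r. Qed.
Lemma mulBl x y z : (x - y) ∙ z = x ∙ z - y ∙ z.
Proof. by rewrite mulDl mulNl. Qed.
Lemma mulBr x y z : z ∙ (x - y) = z ∙ x - z ∙ y.
Proof. by rewrite mulDr mulNr. Qed.

Definition lml u : 'End(V) := linfun (fun x => u ∙ x).
Definition lmr w : 'End(V) := linfun (fun x => x ∙ w).
Lemma lmlE u x : lml u x = u ∙ x.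
Proof. by apply: lfunE_gen => a y z; rewrite mulDr mulZr. Qed.
Lemma lmrE w x : lmr w x = x ∙ w.
Proof. by apply: lfunE_gen => a y z; rewrite mulDl mulZl. Qed.

Lemma m00 {x y} : x \in A0 -> y \in A0 -> x ∙ y \in A0.
Proof. by case: hA => _ _ _ H _; exact: (H false false). Qed.
Lemma m01 {x y} : x \in A0 -> y \in A1 -> x ∙ y \in A1.
Proof. by case: hA => _ _ _ H _; exact: (H false true). Qed.
Lemma m10 {x y} : x \in A1 -> y \in A0 -> x ∙ y \in A1.
Proof. by case: hA => _ _ _ H _; exact: (H true false). Qed.
Lemma m11 {x y} : x \in A1 -> y \in A1 -> x ∙ y \in A0.
Proof. by case: hA => _ _ _ H _; exact: (H true true). Qed.

Lemma B_lin : bilin_form B. Proof. by case: hB. Qed.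
Lemma B0l z : B 0 z = 0.
Proof.
have := (B_lin 1 0 0 z).1; rewrite scale1r addr0 !mul1r => H.
by apply: (addrI (B 0 z)); rewrite addr0 -H.
Qed.
Lemma B0r z : B z 0 = 0.
Proof.
have := (B_lin 1 0 0 z).2; rewrite scale1r addr0 !mul1r => H.
by apply: (addrI (B z 0)); rewrite addr0 -H.
Qed.
Lemma BDl x y z : B (x + y) z = B x z + B y z.
Proof. by have := (B_lin 1 x y z).1; rewrite !scale1r mul1r. Qed.
Lemma BDr x y z : B z (x + y) = B z x + B z y.
Proof. by have := (B_lin 1 x y z).2; rewrite !scale1r mul1r. Qed.
Lemma BZl a x z : B (a *: x) z = a * B x z.
Proof. by have := (B_lin a x 0 z).1; rewrite !addr0 B0l addr0. Qed.
Lemma BZr a x z : B z (a *: x) = a * B z x.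
Proof. by have := (B_lin a x 0 z).2; rewrite !addr0 B0r addr0. Qed.
Lemma BNl x z : B (- x) z = - B x z.
Proof. by rewrite -scaleN1r BZl mulN1r. Qed.
Lemma BNr x z : B z (- x) = - B z x.
Proof. by rewrite -scaleN1r BZr mulN1r. Qed.
Lemma BBl x y z : B (x - y) z = B x z - B y z.
Proof. by rewrite BDl BNl. Qed.
Lemma BBr x y z : B z (x - y) = B z x - B z y.
Proof. by rewrite BDr BNr. Qed.

Lemma B00 {x y} : x \in A0 -> y \in A0 -> B x y = 0.
Proof. by case: hB => _ [H _] _ _ _; exact: H. Qed.
Lemma B11 {x y} : x \in A1 -> y \in A1 -> B x y = 0.
Proof. by case: hB => _ [_ H] _ _ _; exact: H. Qed.
Lemma B01 {x y} : x \in A0 -> y \in A1 -> B x y = B y x.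
Proof. by case: hB => _ _ H _ _ hx hy; rewrite (H false true x y) // expr0 mul1r. Qed.
Lemma Binv x y z : B (x ∙ y) z = B x (y ∙ z).
Proof. by case: hB. Qed.
Lemma Bnd x : (forall y, B x y = 0) -> x = 0.
Proof. by case: hB => _ _ _ _ H; exact: H. Qed.

Definition p0 : 'End(V) := daddv_pi A0 A1.
Definition p1 : 'End(V) := daddv_pi A1 A0.
Lemma cap01 : (A0 :&: A1 = 0)%VS.
Proof. by case: hA => _ /directv_addP. Qed.
Lemma cap10 : (A1 :&: A0 = 0)%VS.
Proof. by rewrite capvC cap01. Qed.
Lemma dec v : p0 v + p1 v = v.
Proof. by rewrite /p0 /p1 daddv_pi_add ?cap01 //; case: hA => _ _ -> _ _; exact: memvf. Qed.
Lemma p0_mem v : p0 v \in A0. Proof. exact: memv_pi. Qed.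
Lemma p1_mem v : p1 v \in A1. Proof. exact: memv_pi. Qed.
Lemma p0_id x : x \in A0 -> p0 x = x.
Proof. by move=> hx; rewrite /p0 daddv_pi_id // cap01. Qed.
Lemma p1_id x : x \in A1 -> p1 x = x.
Proof. by move=> hx; rewrite /p1 daddv_pi_id // cap10. Qed.
Lemma p1_0 x : x \in A0 -> p1 x = 0.
Proof. by move=> hx; apply: (addrI (p0 x)); rewrite dec addr0 p0_id. Qed.
Lemma p0_1 x : x \in A1 -> p0 x = 0.
Proof. by move=> hx; apply: (addIr (p1 x)); rewrite dec add0r p1_id. Qed.

Lemma Bsym x y : B x y = B y x.
Proof.
rewrite -(dec x) -(dec y) !BDl !BDr.
rewrite (B00 (p0_mem x) (p0_mem y)) (B00 (p0_mem y) (p0_mem x)).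
rewrite (B11 (p1_mem x) (p1_mem y)) (B11 (p1_mem y) (p1_mem x)).
rewrite (B01 (p0_mem x) (p1_mem y)) (B01 (p0_mem y) (p1_mem x)).
by rewrite !add0r !addr0 addrC.
Qed.

Lemma pair1 a : a \in A1 -> (forall x, x \in A0 -> B x a = 0) -> a = 0.
Proof.
move=> ha H; apply: Bnd => y; rewrite Bsym -(dec y) BDl (H (p0 y)) ?p0_mem //.
by rewrite (B11 (p1_mem y) ha) addr0.
Qed.
Lemma pair0 x : x \in A0 -> (forall a, a \in A1 -> B a x = 0) -> x = 0.
Proof.
move=> hx H; apply: Bnd => y; rewrite Bsym -(dec y) BDl (H (p1 y)) ?p1_mem //.
by rewrite (B00 (p0_mem y) hx) add0r.
Qed.


Definition lclosed (P : V -> Prop) :=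
  P 0 /\ (forall a x y, P x -> P y -> P (a *: x + y)).

Lemma lclosed_mem (X : {vspace V}) : lclosed (fun x => x \in X).
Proof. by split; [exact: mem0v | move=> a x y hx hy; rewrite memvD ?memvZ]. Qed.

Lemma lc_add P : lclosed P -> forall x y, P x -> P y -> P (x + y).
Proof. by case=> _ H x y hx hy; have := H 1 x y hx hy; rewrite scale1r. Qed.
Lemma lc_scale P : lclosed P -> forall a x, P x -> P (a *: x).
Proof. by case=> H0 H a x hx; have := H a x 0 hx H0; rewrite addr0. Qed.
Lemma lc_sum P (lP : lclosed P) (I : Type) (r : seq I) (Q : pred I) F :
  (forall i, Q i -> P (F i)) -> P (\sum_(i <- r | Q i) F i).
Proof.
move=> H; apply: (big_ind P); [by case: lP | exact: lc_add | exact: H].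
Qed.

Lemma span_ind (U : {vspace V}) P : lclosed P ->
  (forall i : 'I_(\dim U), P (vbasis U)`_i) -> forall u, u \in U -> P u.
Proof.
move=> lP H u hu; rewrite (coord_vbasis hu); apply: lc_sum => // i _.
exact: lc_scale.
Qed.

Lemma vbasis_in (U : {vspace V}) (i : 'I_(\dim U)) : (vbasis U)`_i \in U.
Proof. by apply: vbasis_mem; apply: mem_nth; rewrite size_tuple. Qed.

Lemma line_ind v P : lclosed P -> P v -> forall x, x \in <[v]>%VS -> P x.
Proof. by move=> lP Pv x /vlineP [k ->]; exact: lc_scale. Qed.

Lemma add_ind (U W : {vspace V}) P : lclosed P -> (forall u, u \in U -> P u) ->
  (forall w, w \in W -> P w) -> forall x, x \in (U + W)%VS -> P x.
Proof. by move=> lP HU HW x /memv_addP [u hu [w hw ->]]; apply: lc_add; auto. Qed.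

Lemma img_ind (f : 'End(V)) (U : {vspace V}) P : lclosed P ->
  (forall u, u \in U -> P (f u)) -> forall x, x \in (f @: U)%VS -> P x.
Proof. by move=> lP H x /memv_imgP [u hu ->]; auto. Qed.

Definition prodv (U W : {vspace V}) : {vspace V} :=
  (\sum_(i < \dim U) (lml (vbasis U)`_i @: W))%VS.

Lemma prod_ind (U W : {vspace V}) P : lclosed P ->
  (forall u w, u \in U -> w \in W -> P (u ∙ w)) -> forall x, x \in prodv U W -> P x.
Proof.
move=> lP H x /memv_sumP [vs hvs ->]; apply: lc_sum => // i _.
have := hvs i isT; apply: img_ind => // w hw; rewrite lmlE; apply: H => //.
exact: vbasis_in.
Qed.

Lemma memv_prod (U W : {vspace V}) u w : u \in U -> w \in W -> u ∙ w \in prodv U W.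
Proof.
move=> hu hw; rewrite -lmrE (coord_vbasis hu) linear_sum /=.
apply: memv_sumr => i _; rewrite linearZ /= lmrE memvZ //.
by rewrite -lmlE memv_img.
Qed.

Lemma prodv_sub (U W X : {vspace V}) :
  (forall u w, u \in U -> w \in W -> u ∙ w \in X) -> (prodv U W <= X)%VS.
Proof. by move=> H; apply/subvP; apply: prod_ind => //; exact: lclosed_mem. Qed.

Definition bf (y : V) : 'Hom(V, K^o) := linfun (fun x => (B x y : K^o)).
Lemma bfE y x : bf y x = B x y.
Proof. by apply: lfunE_gen => a u v; rewrite BDl BZl. Qed.

Definition orth (U : {vspace V}) : {vspace V} :=
  (\bigcap_(i < \dim U) lker (bf (vbasis U)`_i))%VS.

Lemma memv_orth x U : (x \in orth U) <-> (forall y, y \in U -> B x y = 0).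
Proof.
split.
  rewrite memvE => /subv_bigcapP H; apply: span_ind.
    by split => [|a u v hu hv]; rewrite ?B0r // BDr BZr hu hv mulr0 addr0.
  by move=> i; have := H i isT; rewrite -memvE memv_ker bfE => /eqP.
move=> H; rewrite memvE; apply/subv_bigcapP => i _.
by rewrite -memvE memv_ker bfE H // vbasis_in.
Qed.

Lemma addv_inl (U W : {vspace V}) x : x \in U -> x \in (U + W)%VS.
Proof. by move/(subvP (addvSl U W)). Qed.
Lemma addv_inr (U W : {vspace V}) x : x \in W -> x \in (U + W)%VS.
Proof. by move/(subvP (addvSr U W)). Qed.

Lemma span_seq_ind (X : seq V) P : lclosed P -> (forall x, x \in X -> P x) ->
  forall u, u \in <<X>>%VS -> P u.
Proof.
move=> lP H u hu; rewrite (coord_span (X := in_tuple X) hu); apply: lc_sum => // i _.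
by apply: lc_scale => //; apply: H; apply: mem_nth.
Qed.

Lemma dim_ltn {U W : {vspace V}} : (U <= W)%VS -> U != W -> (\dim U < \dim W)%N.
Proof. by move=> s; rewrite (ltn_leqif (dimv_leqif_eq s)). Qed.

Lemma dimD_le (U : {vspace V}) : (\dim U <= \dim (fullv : {vspace V}))%N.
Proof. exact: dimvS (subvf U). Qed.

Section StepF.
Variables (C : {vspace V}) (t w : V).
Hypothesis hC : forall x y, x \in C -> y \in C -> x ∙ y \in C.
Hypothesis ht : t \in C.
Hypothesis hw : w != 0.
Hypothesis htw : t ∙ w = w.

Let pw k := iter k (mul t) t.
Let pwS k : pw k.+1 = t ∙ pw k. Proof. by []. Qed.
Let pw_in k : pw k \in C.
Proof. by elim: k => [|k IH] //; rewrite pwS hC. Qed.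
Let pw_w k : pw k ∙ w = w.
Proof. by elim: k => [|k IH] //; rewrite pwS mulA IH. Qed.
Let pw_add i j : pw i ∙ pw j = pw (i + j).+1.
Proof. by elim: i => [|i IH] //; rewrite pwS mulA IH addSn. Qed.

Let D := \dim (fullv : {vspace V}).
Let Pm m := <<mkseq pw m>>%VS.

Let Pm_sub m : (Pm m <= Pm m.+1)%VS.
Proof. by rewrite /Pm mkseqS -cats1 span_cat addvSl. Qed.
Let pw_Pm m : pw m \in Pm m.+1.
Proof. by rewrite /Pm mkseqS -cats1 span_cat; apply/addv_inr/memv_span; rewrite inE. Qed.

Let stab : exists m, pw m \in Pm m.
Proof.
case/boolP: [exists i : 'I_D.+1, pw i \in Pm i] => [/existsP [i hi]|H]; first by exists i.
have H1 m : (m <= D.+1)%N -> (m <= \dim (Pm m))%N.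
  elim: m => [|m IH] hm //.
  have hi : pw m \notin Pm m.
    by move: H; rewrite negb_exists => /forallP /(_ (Ordinal hm)).
  have: Pm m != Pm m.+1 by apply/eqP => E; move: hi; rewrite E pw_Pm.
  move/(dim_ltn (Pm_sub m)) => lt; apply: leq_ltn_trans lt; exact: IH (ltnW hm).
by have := H1 D.+1 (leqnn _); rewrite ltnNge dimD_le.
Qed.

Lemma stepF : exists2 f, f \in C & f ∙ f = f /\ f != 0.
Proof.
have [m0 hm0] := stab.
pose P := Pm m0.
have pw_mem i : (i < m0)%N -> pw i \in P.
  by move=> hi; apply: memv_span; rewrite /mkseq; apply: map_f; rewrite mem_iota.
have tP : forall x, x \in P -> t ∙ x \in P.
  apply: span_seq_ind.
    split; first by rewrite mul0r mem0v.
    by move=> a x y hx hy; rewrite mulDr mulZr memvD ?memvZ.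
  move=> x /mapP [i]; rewrite mem_iota add0n => /andP [_ hi] ->.
  rewrite -pwS; case: (ltnP i.+1 m0) => h; first exact: pw_mem.
  by have -> : i.+1 = m0 by apply/eqP; rewrite eqn_leq hi h.
have pwP : forall k, pw k \in P.
  move=> k; case: (ltnP k m0) => hk; first exact: pw_mem.
  rewrite -(subnKC hk); elim: (k - m0)%N => [|d IH]; first by rewrite addn0.
  by rewrite addnS pwS; exact: tP.
have mP : forall x y, x \in P -> y \in P -> x ∙ y \in P.
  move=> x y hx hy; move: x hx; apply: span_seq_ind.
    split; first by rewrite mul0l mem0v.
    by move=> a x z hx hz; rewrite mulDl mulZl memvD ?memvZ.
  move=> x /mapP [i _ ->]; move: y hy; apply: span_seq_ind.
    split; first by rewrite mul0r mem0v.
    by move=> a u v hu hv; rewrite mulDr mulZr memvD ?memvZ.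
  by move=> y /mapP [j _ ->]; rewrite pw_add; exact: pwP.
have cP : forall x y, x \in P -> y \in P -> x ∙ y = y ∙ x.
  move=> x y hx hy; move: x hx; apply: span_seq_ind.
    split; first by rewrite mul0l mul0r.
    by move=> a u v hu hv; rewrite mulDl mulZl mulDr mulZr hu hv.
  move=> x /mapP [i _ ->]; move: y hy; apply: span_seq_ind.
    split; first by rewrite mul0l mul0r.
    by move=> a u v hu hv; rewrite mulDl mulZl mulDr mulZr hu hv.
  by move=> y /mapP [j _ ->]; rewrite !pw_add addnC.
have PC : forall x, x \in P -> x \in C.
  apply: span_seq_ind; first exact: lclosed_mem.
  by move=> x /mapP [i _ ->]; exact: pw_in.
pose Im k := (lml (pw k) @: P)%VS.
have ImS k : Im k.+1 = (lml t @: Im k)%VS.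
  rewrite /Im -limg_comp; congr (_ @: _)%VS; apply/lfunP => x.
  by rewrite comp_lfunE !lmlE pwS mulA.
have pwS' k : pw k.+1 = pw k ∙ t by rewrite (pw_add k 0) addn0.
have ImsubS k : (Im k.+1 <= Im k)%VS.
  apply/subvP => x /memv_imgP [p hp ->]; rewrite lmlE pwS' mulA -lmlE.
  by apply: memv_img; exact: tP.
have [N hN] : exists N, Im N.+1 = Im N.
  case/boolP: [exists i : 'I_D.+1, Im i.+1 == Im i] => [/existsP [i /eqP hi]|H].
    by exists i.
  have H1 m : (m <= D.+1)%N -> (\dim (Im m) + m <= D)%N.
    elim: m => [|m IH] hm; first by rewrite addn0 dimD_le.
    have hi : Im m.+1 != Im m.
      by move: H; rewrite negb_exists => /forallP /(_ (Ordinal hm)).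
    have := dim_ltn (ImsubS m) hi; have := IH (ltnW hm); lia.
  by have := H1 D.+1 (leqnn _); lia.
have Ist : forall k, (N <= k)%N -> Im k = Im N.
  move=> k hk; rewrite -(subnKC hk); elim: (k - N)%N => [|d IH]; first by rewrite addn0.
  by rewrite addnS ImS IH -ImS hN.
pose g := pw N.+1.
have gI : g \in Im N by rewrite /g pwS' -lmlE; apply: memv_img; exact: (pwP 0).
pose k := (N.+1 + N.+1).+1.
have gg : g ∙ g = pw k by rewrite pw_add.
rewrite -(Ist k) in gI; last by rewrite /k; lia.
case/memv_imgP: gI => p hp; rewrite lmlE -gg => hg.
have hg' : g ∙ (g ∙ p) = g by rewrite -mulA -hg.
exists (g ∙ p); first by apply: PC; apply: mP => //; exact: pwP.
split.
  by rewrite -mulA [(g ∙ p) ∙ g]mulA (cP p g hp (pwP _)) hg'.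
apply/eqP => h0; move: hw; rewrite -(pw_w N.+1) -/g -hg' h0 mul0r mul0l eqxx.
by [].
Qed.

End StepF.

Lemma graded_p (I : {vspace V}) : I = (I :&: A0 + I :&: A1)%VS ->
  forall v, v \in I -> p0 v \in I /\ p1 v \in I.
Proof.
move=> hI v; rewrite {1}hI => /memv_addP [i0 h0 [i1 h1 ->]].
move: h0 h1; rewrite !memv_cap => /andP [h0I h0A] /andP [h1I h1A].
by rewrite !linearD /= p0_id // p0_1 // p1_0 // p1_id // addr0 add0r.
Qed.

Lemma orth_graded (I : {vspace V}) : I = (I :&: A0 + I :&: A1)%VS ->
  forall r, r \in orth I -> p0 r \in orth I /\ p1 r \in orth I.
Proof.
move=> hI r /memv_orth hr; split; apply/memv_orth => y hy;
  have [hy0 hy1] := graded_p I hI y hy.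
  have := hr _ hy1; rewrite -{1}(dec r) BDl (B11 (p1_mem r) (p1_mem y)) addr0 => H.
  by rewrite -(dec y) BDr (B00 (p0_mem r) (p0_mem y)) add0r.
have := hr _ hy0; rewrite -{1}(dec r) BDl (B00 (p0_mem r) (p0_mem y)) add0r => H.
by rewrite -(dec y) BDr (B11 (p1_mem r) (p1_mem y)) addr0.
Qed.

Section Semiprime.
Hypothesis hS : semisimple_sub mul A0.

Lemma sq0_ideal (J : {vspace V}) : ideal_in mul A0 J ->
  (forall x y, x \in J -> y \in J -> x ∙ y = 0) -> J = 0%VS.
Proof.
move=> hJ H; apply: hS.2 => //; exists 1%N => x s hx hs.
case: s hs => [|y [|]] //= /andP [hy _] _; exact: H.
Qed.


Lemma gen_ideal0 q : q \in A0 -> q ∙ q = 0 ->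
  (forall x, x \in A0 -> (q ∙ x) ∙ q = 0) -> q = 0.
Proof.
move=> hq hqq hqxq.
pose Q1 := prodv A0 <[q]>%VS.
pose Q2 := prodv <[q]>%VS A0.
pose Q3 := prodv Q1 A0.
pose G := (<[q]> + Q1 + Q2 + Q3)%VS.
pose P1 g := g ∙ q = 0 /\ forall x, x \in A0 -> g ∙ (x ∙ q) = 0.
have lP1 : lclosed P1.
  split; first by split => [|x _]; rewrite mul0l.
  move=> a x y [h1 h2] [h3 h4]; split => [|z hz].
    by rewrite mulDl mulZl h1 h3 scaler0 addr0.
  by rewrite mulDl mulZl h2 // h4 // scaler0 addr0.
have P1q : P1 q by split => // x hx; rewrite -mulA hqxq.
have P1l a g : P1 g -> P1 (a ∙ g).
  by case=> h1 h2; split => [|x hx]; rewrite mulA ?h1 ?h2 // mul0r.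
have P1r g w : P1 g -> w \in A0 -> P1 (g ∙ w).
  case=> h1 h2 hw; split => [|x hx]; rewrite mulA ?h2 //.
  by rewrite -[w ∙ (x ∙ q)]mulA h2 // m00.
have lq : forall x, x \in <[q]>%VS -> P1 x by apply: line_ind.
have l1 : forall x, x \in Q1 -> P1 x.
  by apply: prod_ind => // u w hu hw; apply: P1l; apply: lq.
have l2 : forall x, x \in Q2 -> P1 x.
  by apply: prod_ind => // u w hu hw; apply: P1r => //; apply: lq.
have l3 : forall x, x \in Q3 -> P1 x.
  by apply: prod_ind => // u w hu hw; apply: P1r => //; apply: l1.
have PG : forall g, g \in G -> P1 g.
  by apply: add_ind => //; apply: add_ind => //; apply: add_ind.
pose P2 g := forall h, P1 h -> h ∙ g = 0.
have lP2 : lclosed P2.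
  split; first by move=> h _; rewrite mul0r.
  by move=> a x y hx hy h hh; rewrite mulDr mulZr hx // hy // scaler0 addr0.
have m2q : forall x, x \in <[q]>%VS -> P2 x.
  by apply: line_ind => // h [].
have m21 : forall x, x \in Q1 -> P2 x.
  apply: prod_ind => // u w hu; move: w; apply: line_ind.
    split => [|a x y hx hy] h hh; first by rewrite !mul0r.
    by rewrite !mulDr !mulZr (hx h hh) (hy h hh) scaler0 addr0.
  by move=> h [_ H]; exact: H.
have m22 : forall x, x \in Q2 -> P2 x.
  by apply: prod_ind => // u w hu hw h hh; rewrite -mulA (m2q u hu h hh) mul0l.
have m23 : forall x, x \in Q3 -> P2 x.
  by apply: prod_ind => // u w hu hw h hh; rewrite -mulA (m21 u hu h hh) mul0l.
have PG2 : forall g, g \in G -> P2 g.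
  by apply: add_ind => //; apply: add_ind => //; apply: add_ind.
have inq x : x \in <[q]>%VS -> x \in G by move=> hx; do 3 apply: addv_inl.
have in1 x : x \in Q1 -> x \in G by move=> hx; do 2 apply: addv_inl; apply: addv_inr.
have in2 x : x \in Q2 -> x \in G by move=> hx; apply: addv_inl; apply: addv_inr.
have in3 x : x \in Q3 -> x \in G by move=> hx; apply: addv_inr.
have sq : forall x, x \in <[q]>%VS -> x \in A0.
  by apply: line_ind => //; exact: lclosed_mem.
have s1 : forall x, x \in Q1 -> x \in A0.
  by apply: prod_ind; [exact: lclosed_mem | move=> u w hu hw; apply: m00 => //; apply: sq].
have s2 : forall x, x \in Q2 -> x \in A0.
  by apply: prod_ind; [exact: lclosed_mem | move=> u w hu hw; apply: m00 => //; apply: sq].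
have s3 : forall x, x \in Q3 -> x \in A0.
  by apply: prod_ind; [exact: lclosed_mem | move=> u w hu hw; apply: m00 => //; apply: s1].
have lQ1 x : x \in A0 -> forall y, y \in Q1 -> x ∙ y \in Q1.
  move=> hx; apply: prod_ind.
    by split => [|a u v hu hv]; rewrite ?mul0r ?mem0v // mulDr mulZr memvD ?memvZ.
  by move=> u w hu hw; rewrite -mulA memv_prod // m00.
have Gideal : ideal_in mul A0 G.
  split.
    by apply/subvP; apply: add_ind; [exact: lclosed_mem| apply: add_ind; [exact: lclosed_mem|apply: add_ind; [exact: lclosed_mem| |]| ] |].
  move=> x y hx; move: y; apply: add_ind.
  - by split => [|a u v [hu1 hu2] [hv1 hv2]]; rewrite ?mul0r ?mul0l ?mem0v //;
      rewrite mulDr mulDl mulZr mulZl !memvD ?memvZ.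
  - apply: add_ind.
    + by split => [|a u v [hu1 hu2] [hv1 hv2]]; rewrite ?mul0r ?mul0l ?mem0v //;
        rewrite mulDr mulDl mulZr mulZl !memvD ?memvZ.
    + apply: add_ind.
      * by split => [|a u v [hu1 hu2] [hv1 hv2]]; rewrite ?mul0r ?mul0l ?mem0v //;
          rewrite mulDr mulDl mulZr mulZl !memvD ?memvZ.
      * move=> u hu; split; first by apply: in1; apply: memv_prod.
        by apply: in2; apply: memv_prod.
      * move=> u hu; split; first by apply: in1; apply: lQ1.
        by apply: in3; apply: memv_prod.
    + apply: prod_ind.
        by split => [|a u v [hu1 hu2] [hv1 hv2]]; rewrite ?mul0r ?mul0l ?mem0v //;
          rewrite mulDr mulDl mulZr mulZl !memvD ?memvZ.
      move=> u w hu hw; split.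
        by rewrite -mulA; apply: in3; apply: memv_prod => //; apply: memv_prod.
      by rewrite mulA; apply: in2; apply: memv_prod => //; apply: m00.
  - apply: prod_ind.
      by split => [|a u v [hu1 hu2] [hv1 hv2]]; rewrite ?mul0r ?mul0l ?mem0v //;
        rewrite mulDr mulDl mulZr mulZl !memvD ?memvZ.
    move=> u w hu hw; split.
      by rewrite -mulA; apply: in3; apply: memv_prod => //; apply: lQ1.
    by rewrite mulA; apply: in3; apply: memv_prod => //; apply: m00.
have G0 : G = 0%VS.
  apply: sq0_ideal => // x y hx hy.
  by apply: (PG2 y hy); apply: PG.
by apply/eqP; rewrite -memv0 -G0; apply: inq; exact: memv_line.
Qed.

Section IdealUnit.
Variable J : {vspace V}.
Hypothesis hJ : ideal_in mul A0 J.

Lemma JA0 {x} : x \in J -> x \in A0.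
Proof. by move=> hx; apply: (subvP hJ.1). Qed.
Lemma jl {x y} : x \in A0 -> y \in J -> x ∙ y \in J.
Proof. by move=> hx hy; case: (hJ.2 x y hx hy). Qed.
Lemma jr {x y} : x \in A0 -> y \in J -> y ∙ x \in J.
Proof. by move=> hx hy; case: (hJ.2 x y hx hy). Qed.
Lemma JJ {x y} : x \in J -> y \in J -> x ∙ y \in J.
Proof. by move=> hx hy; apply: jl => //; exact: JA0. Qed.

Section Idem.
Variable e : V.
Hypothesis he : e \in J.
Hypothesis hee : e ∙ e = e.

Lemma eeK z : e ∙ (e ∙ z) = e ∙ z. Proof. by rewrite -mulA hee. Qed.
Lemma Kee z : (z ∙ e) ∙ e = z ∙ e. Proof. by rewrite mulA hee. Qed.

Definition corner := (J :&: lker (lml e) :&: lker (lmr e))%VS.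
Lemma cornerP x : (x \in corner) = [&& x \in J, e ∙ x == 0 & x ∙ e == 0].
Proof. by rewrite !memv_cap !memv_ker lmlE lmrE andbA. Qed.

Lemma corner_mul c c' : c \in corner -> c' \in corner -> c ∙ c' \in corner.
Proof.
rewrite !cornerP => /and3P [h1 /eqP h2 /eqP h3] /and3P [h4 /eqP h5 /eqP h6].
by rewrite JJ //= -mulA h2 mul0l mulA h6 mul0r !eqxx.
Qed.

Lemma corner_J c : c \in corner -> c \in J.
Proof. by rewrite cornerP => /and3P []. Qed.

Lemma star y : corner = 0%VS -> y \in J -> y - e ∙ y = (y - e ∙ y) ∙ e.
Proof.
move=> c0 hy; set z := y - e ∙ y.
have hz : z \in J by rewrite memvB // jl // JA0.
have ez : e ∙ z = 0 by rewrite mulBr eeK subrr.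
have : z - z ∙ e \in corner.
  rewrite cornerP memvB ?jr ?JA0 //= mulBr ez -mulA ez mul0l subrr eqxx /=.
  by rewrite mulBl Kee subrr.
by rewrite c0 memv0 subr_eq0 => /eqP.
Qed.

Lemma star' y : corner = 0%VS -> y \in J -> y - y ∙ e = e ∙ (y - y ∙ e).
Proof.
move=> c0 hy; set z := y - y ∙ e.
have hz : z \in J by rewrite memvB // jr // JA0.
have ze : z ∙ e = 0 by rewrite mulBl Kee subrr.
have : z - e ∙ z \in corner.
  rewrite cornerP memvB ?jl ?JA0 //= mulBr eeK subrr eqxx /=.
  by rewrite mulBl ze mulA ze mul0r subrr.
by rewrite c0 memv0 subr_eq0 => /eqP.
Qed.

Lemma unit_of_corner0 : corner = 0%VS -> forall j, j \in J -> e ∙ j = j /\ j ∙ e = j.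
Proof.
move=> c0 j hj.
have hje : j ∙ e = e ∙ (j ∙ e).
  set q := j ∙ e - e ∙ (j ∙ e).
  have hq : q \in J by rewrite memvB ?jl ?jr ?JA0.
  have eq0 : e ∙ q = 0 by rewrite mulBr eeK subrr.
  have qe : q = q ∙ e by exact: (star _ c0 (jr (JA0 he) hj)).
  suff : q = 0 by move/eqP; rewrite subr_eq0 => /eqP.
  apply: gen_ideal0; first exact: JA0.
    by rewrite {1}qe mulA eq0 mul0r.
  move=> x hx; set y := q ∙ x.
  have hy : y \in J by exact: jr.
  have ey : e ∙ y = 0 by rewrite /y -mulA eq0 mul0l.
  have := star _ c0 hy; rewrite ey subr0 => ->.
  by rewrite mulA eq0 mul0r.
have hej : e ∙ j = (e ∙ j) ∙ e.
  set p := e ∙ j - (e ∙ j) ∙ e.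
  have hej0 : e ∙ j \in J := jl (JA0 he) hj.
  have hp : p \in J by rewrite memvB // jr // JA0.
  have pe0 : p ∙ e = 0 by rewrite mulBl Kee subrr.
  have ep : p = e ∙ p by exact: (star' _ c0 (jl (JA0 he) hj)).
  suff : p = 0 by move/eqP; rewrite subr_eq0 => /eqP.
  apply: gen_ideal0; first exact: JA0.
    by rewrite {2}ep -mulA pe0 mul0l.
  move=> x hx; rewrite mulA; set z := x ∙ p.
  have hz : z \in J by exact: jl.
  have ze : z ∙ e = 0 by rewrite /z mulA pe0 mul0r.
  have := star' _ c0 hz; rewrite ze subr0 => ->.
  by rewrite -mulA pe0 mul0l.
have je : j ∙ e = e ∙ j by rewrite hje -mulA -hej.
have : j - e ∙ j = 0 by rewrite (star _ c0 hj) mulBl -hej je subrr.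
by move/eqP; rewrite subr_eq0 => /eqP ej; split; rewrite ?je -ej.
Qed.

Lemma corner_idem : corner != 0%VS -> exists2 f, f \in corner & f ∙ f = f /\ f != 0.
Proof.
move=> cn0; pose C := corner.
have key : forall u, u \in C -> u != 0 -> (lmr u @: C)%VS != 0%VS.
  move=> u hu hu0; apply/eqP => Cu0; move/eqP: hu0; apply.
  have cu : forall c, c \in C -> c ∙ u = 0.
    by move=> c hc; apply/eqP; rewrite -memv0 -Cu0 -lmrE memv_img.
  move: (hu); rewrite cornerP => /and3P [huJ /eqP eu /eqP ue].
  apply: gen_ideal0; [exact: JA0 | exact: cu |].
  move=> x hx; set c := u ∙ x - (u ∙ x) ∙ e.
  have hc : c \in C.
    have hux : u ∙ x \in J := jr hx huJ.
    have h1 : (u ∙ x) ∙ e \in J := jr (JA0 he) hux.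
    rewrite cornerP /c memvB //= mulBr -!mulA eu !mul0l subrr eqxx /=.
    by rewrite mulBl Kee subrr.
  by have := cu c hc; rewrite /c mulBl [((u ∙ x) ∙ e) ∙ u]mulA eu mul0r subr0.
suff H : forall n u, u \in C -> u != 0 -> (\dim (lmr u @: C) <= n)%N ->
    exists2 f, f \in corner & f ∙ f = f /\ f != 0.
  by apply: (H _ (vpick C)); [exact: memv_pick | rewrite vpick0 | exact: leqnn].
elim=> [|n IH] u hu hu0 hd.
  by move: (key u hu hu0); rewrite -dimv_eq0 -leqn0 hd.
have [v hv] : exists v, v \in (lmr u @: C)%VS /\ v != 0.
  by exists (vpick (lmr u @: C)); rewrite memv_pick vpick0 key.
case: hv => /memv_imgP [s hs ->]; rewrite lmrE => hsu.
have hw : s ∙ u \in C by exact: corner_mul.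
have sub : (lmr (s ∙ u) @: C <= lmr u @: C)%VS.
  apply/subvP => x /memv_imgP [c hc ->]; rewrite lmrE -mulA -lmrE.
  by apply: memv_img; exact: corner_mul.
case: (eqVneq (lmr (s ∙ u) @: C)%VS (lmr u @: C)%VS) => E.
  have : s ∙ u \in (lmr (s ∙ u) @: C)%VS by rewrite E -lmrE memv_img.
  case/memv_imgP => t ht; rewrite lmrE => htw.
  exact: (stepF _ _ _ corner_mul ht hsu (esym htw)).
apply: (IH (s ∙ u)) => //.
by have := dim_ltn sub E; lia.
Qed.

End Idem.
Lemma ideal_unit : exists2 e, e \in J & forall j, j \in J -> e ∙ j = j /\ j ∙ e = j.
Proof.
pose D := \dim (fullv : {vspace V}).
pose fixd e := (J :&: fixedSpace (lml e))%VS.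
have fixdP e x : (x \in fixd e) = (x \in J) && (e ∙ x == x).
  by rewrite memv_cap /fixedSpace memv_ker add_lfunE opp_lfunE id_lfunE lmlE subr_eq0.
suff H : forall n e, e \in J -> e ∙ e = e -> (D - \dim (fixd e) < n)%N ->
    exists2 e, e \in J & forall j, j \in J -> e ∙ j = j /\ j ∙ e = j.
  by apply: (H D.+1 0); [exact: mem0v | exact: mul0l | lia].
elim=> [|n IH] e he hee hn //.
case: (eqVneq (corner e) 0%VS) => c0.
  by exists e => //; exact: unit_of_corner0.
have [f hf [hff hf0]] := corner_idem e he hee c0.
move: hf; rewrite cornerP => /and3P [hfJ /eqP ef /eqP fe].
apply: (IH (e + f)); first by rewrite memvD.
  by rewrite mulDl !mulDr hee ef fe hff addr0 add0r.
have sub : (fixd e <= fixd (e + f)%R)%VS.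
  apply/subvP => x; rewrite !fixdP => /andP [-> /eqP ex] /=.
  by rewrite mulDl ex -{2}ex -mulA fe mul0l addr0.
have neq : fixd e != fixd (e + f).
  apply/eqP => E; have : f \in fixd (e + f).
    by rewrite fixdP hfJ mulDl ef hff add0r eqxx.
  by rewrite -E fixdP ef eq_sym (negbTE hf0) andbF.
have := dim_ltn sub neq; have := dimD_le (fixd (e + f)); rewrite -/D; lia.
Qed.

End IdealUnit.

Hypothesis hI : B_irreducible mul A0 A1 B.

Lemma A0_simple J : ideal_in mul A0 J -> J = 0%VS \/ J = A0.
Proof.
move=> hJ.
have [e he eU] := ideal_unit J hJ.
have eA0 : e \in A0 := JA0 J hJ he.
have ee : e ∙ e = e by case: (eU e he).
have c0 x : x \in A0 -> e ∙ x = x ∙ e.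
  move=> hx; have h1 : e ∙ x \in J := jr J hJ hx he.
  have h2 : x ∙ e \in J := jl J hJ hx he.
  by rewrite -{1}(eU _ h1).2 mulA (eU _ h2).1.
have c1 a : a \in A1 -> e ∙ a = a ∙ e.
  move=> ha; apply/eqP; rewrite -subr_eq0; apply/eqP; apply: pair1.
    by apply: memvB; [apply: m01 | apply: m10].
  by move=> x hx; rewrite BBr -Binv [B x (a ∙ e)]Bsym [B (a ∙ e) x]Binv [B a (e ∙ x)]Bsym c0 // subrr.
have cen v : e ∙ v = v ∙ e by rewrite -(dec v) mulDr mulDl c0 ?p0_mem // c1 ?p1_mem.
pose eA := limg (lml e).
have eAP x : reflect (exists v, x = e ∙ v) (x \in eA).
  apply: (iffP idP) => [/memv_imgP [v _ ->]|[v ->]]; first by exists v; rewrite lmlE.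
  by rewrite -lmlE memv_img ?memvf.
have eeK z : e ∙ (e ∙ z) = e ∙ z by rewrite -mulA ee.
have gI : graded_ideal mul A0 A1 eA.
  split.
    apply/eqP; rewrite eqEsubv; apply/andP; split; last first.
      by rewrite subv_add !capvSl.
    apply/subvP => x /eAP [v ->]; rewrite -(dec v) mulDr; apply: memv_add.
      by rewrite memv_cap m00 ?p0_mem // andbT; apply/eAP; exists (p0 v).
    by rewrite memv_cap m01 ?p1_mem // andbT; apply/eAP; exists (p1 v).
  move=> x y /eAP [v ->]; split; apply/eAP.
    by exists (x ∙ v); rewrite -mulA -cen mulA.
  by exists (v ∙ x); rewrite mulA.
have nd : nondeg_on B eA.
  move=> x /eAP [v ->] H; apply: Bnd => z.
  rewrite -(subrK (e ∙ z) z) BDr (H (e ∙ z)); last by apply/eAP; exists z.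
  by rewrite addr0 (cen v) Binv mulBr eeK subrr B0r.
case: (hI eA gI nd) => E.
  left; apply/eqP; rewrite -subv0; apply/subvP => j hj.
  have : e \in eA by apply/eAP; exists e.
  rewrite E memv0 => /eqP e0.
  by have := (eU j hj).1; rewrite e0 mul0l => <-; rewrite mem0v.
right; apply: subv_anti; rewrite hJ.1 /=.
apply/subvP => x hx; have : x \in eA by rewrite E memvf.
case/eAP => v xE; have ex : e ∙ x = x by rewrite xE eeK.
by rewrite -ex; apply: (jr J hJ hx he).
Qed.

Lemma A11_zero : ~ super_simple mul A0 A1 -> (exists x y, x ∙ y != 0) ->
  forall a b, a \in A1 -> b \in A1 -> a ∙ b = 0.
Proof.
move=> nss hxy a b ha hb; apply/eqP/negPn/negP => hab; apply: nss.
split => // I [hIg hIi].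
case: (eqVneq I 0%VS) => [->|I0]; first by left.
case: (eqVneq I fullv) => [->|If]; first by right.
exfalso.
pose R := (I :&: orth I)%VS.
have RI r : r \in R -> r \in I by rewrite memv_cap => /andP [].
have RO r : r \in R -> forall y, y \in I -> B r y = 0.
  by rewrite memv_cap => /andP [_ /memv_orth].
have Rid x r : r \in R -> x ∙ r \in R /\ r ∙ x \in R.
  move=> hr; have [h1 h2] := hIi x r (RI r hr).
  rewrite !memv_cap h1 h2 /=; split; apply/memv_orth => y hy.
    rewrite Bsym -Binv Bsym; apply: RO => //; exact: (hIi x y hy).2.
  by rewrite Binv; apply: RO => //; exact: (hIi x y hy).1.
have Rg r : r \in R -> p0 r \in R /\ p1 r \in R.
  move=> hr; have [h1 h2] := graded_p I hIg r (RI r hr).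
  have [h3 h4] : p0 r \in orth I /\ p1 r \in orth I.
    by apply: orth_graded => //; move: hr; rewrite memv_cap => /andP [].
  by rewrite !memv_cap h1 h2 h3 h4.
have Rn0 : R != 0%VS.
  apply/eqP => R0.
  have nd : nondeg_on B I.
    move=> x hx H; apply/eqP; rewrite -memv0 -R0 memv_cap hx /=.
    by apply/memv_orth.
  by case: (hI I (conj hIg hIi) nd) => E; [move/eqP: I0 | move/eqP: If].
pose R0 := (R :&: A0)%VS.
have R0i : ideal_in mul A0 R0.
  split; first exact: capvSr.
  move=> x y hx; rewrite memv_cap => /andP [hyR hyA].
  have [h1 h2] := Rid x y hyR.
  by split; apply/memv_capP; split => //; [exact: m00 | exact: (m00 hyA hx)].
have R00 : R0 = 0%VS.
  apply: sq0_ideal => // x y /memv_capP [hxR _] /memv_capP [hyR _].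
  apply: Bnd => z; rewrite Binv; apply: RO => //.
  by apply: RI; exact: (Rid z y hyR).2.
have RA1 r : r \in R -> r \in A1.
  move=> hr; have : p0 r \in R0 by rewrite memv_cap (Rg r hr).1 p0_mem.
  rewrite R00 memv0 => /eqP h; by rewrite -(dec r) h add0r p1_mem.
pose r := vpick R.
have hr : r \in R by exact: memv_pick.
have r0 : r != 0 by rewrite vpick0.
pose M := (A0 :&: orth R)%VS.
have Mi : ideal_in mul A0 M.
  split; first exact: capvSl.
  move=> x m hx; rewrite memv_cap => /andP [hmA /memv_orth hm].
  rewrite !memv_cap m00 // (m00 hmA hx) /=; split; apply/memv_orth => y hy.
    by rewrite Bsym -Binv Bsym hm //; exact: (Rid x y hy).2.
  by rewrite Binv hm //; exact: (Rid x y hy).1.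
case: (A0_simple M Mi) => E.
  have : a ∙ b \in M.
    rewrite memv_cap m11 //=; apply/memv_orth => y hy.
    have : b ∙ y \in R0 by rewrite memv_cap (Rid b y hy).1 m11 // RA1.
    by rewrite R00 memv0 => /eqP h; rewrite Binv h B0r.
  by rewrite E memv0 (negbTE hab).
move/eqP: r0; apply; apply: pair1; first exact: RA1.
move=> x hx; have : x \in M by rewrite E.
by rewrite memv_cap => /andP [_ /memv_orth]; apply.
Qed.

Lemma A0_prod : (fullv : {vspace V}) != 0%VS ->
  exists x y, [/\ x \in A0, y \in A0 & x ∙ y != 0].
Proof.
move=> fn0.
case/boolP: [exists i : 'I_(\dim A0), exists j : 'I_(\dim A0),
    (vbasis A0)`_i ∙ (vbasis A0)`_j != 0].
  by case/existsP => i /existsP [j h]; exists (vbasis A0)`_i, (vbasis A0)`_j; split; rewrite ?vbasis_in.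
move=> H; exfalso.
have all0 : forall x y, x \in A0 -> y \in A0 -> x ∙ y = 0.
  move=> x y hx hy; move: x hx; apply: span_ind.
    by split; [rewrite mul0l | move=> a u v hu hv; rewrite mulDl mulZl hu hv scaler0 addr0].
  move=> i; move: y hy; apply: span_ind.
    by split; [rewrite mul0r | move=> a u v hu hv; rewrite mulDr mulZr hu hv scaler0 addr0].
  move=> j; move: H; rewrite negb_exists => /forallP /(_ i).
  by rewrite negb_exists => /forallP /(_ j); rewrite negbK => /eqP.
have A00 : A0 = 0%VS.
  apply: sq0_ideal => //; split; first exact: subvv.
  by move=> x y hx hy; rewrite !m00.
move/eqP: fn0; apply; apply/eqP; rewrite -subv0; apply/subvP => v _.
rewrite memv0; apply/eqP; apply: Bnd => y.
have h0 z : p0 z = 0 by apply/eqP; rewrite -memv0 -A00 p0_mem.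
by rewrite -(dec v) -(dec y) !h0 !add0r (B11 (p1_mem v) (p1_mem y)).
Qed.

Lemma main_sec : (fullv : {vspace V}) != 0%VS -> ~ super_simple mul A0 A1 ->
  exists (W : vectType K) (mS : W -> W -> W) (phi : 'Hom(V, (W * 'Hom(W, K^o))%type)),
    [/\ simple_assoc_alg mS,
        bijective phi,
        (forall x : V, x \in A0 -> (phi x).2 = 0),
        (forall x : V, x \in A1 -> (phi x).1 = 0)
      & (forall x y : V, phi (mul x y) = sd_mul mS (phi x) (phi y))].
Proof.
move=> fn0 nss.
have [x0 [y0 [hx0 hy0 hxy0]]] := A0_prod fn0.
have A11 : forall a b, a \in A1 -> b \in A1 -> a ∙ b = 0.
  by apply: A11_zero => //; exists x0, y0.
pose W := subvs_of A0.
pose mS (u v : W) : W := vsproj A0 (vsval u ∙ vsval v).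
have vK x : x \in A0 -> vsval (vsproj A0 x) = x by move=> hx; exact: vsprojK.
have mSE u v : vsval (mS u v) = vsval u ∙ vsval v by rewrite vK // m00 ?subvsP.
have mSDl a u v w : mS (a *: u + v) w = a *: mS u w + mS v w.
  by apply: subvs_inj; rewrite linearD linearZ /= !mSE linearD linearZ /= mulDl mulZl.
have mSDr a u v w : mS w (a *: u + v) = a *: mS w u + mS w v.
  by apply: subvs_inj; rewrite linearD linearZ /= !mSE linearD linearZ /= mulDr mulZr.
have simp : simple_assoc_alg mS.
  split.
  - by move=> a u v w; rewrite mSDl mSDr.
  - by move=> u v w; apply: subvs_inj; rewrite !mSE mulA.
  - exists (vsproj A0 x0), (vsproj A0 y0); apply/eqP => h.
    have := mSE (vsproj A0 x0) (vsproj A0 y0); rewrite h linear0 !vK // => H.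
    by move/eqP: hxy0; apply; rewrite -H.
  - move=> J [_ hJ].
    pose vl : 'Hom(W, V) := linfun vsval.
    have vlE w : vl w = vsval w by apply: lfunE_gen; exact: vsval_is_linear.
    pose J' := (vl @: J)%VS.
    have J'P z : reflect (exists2 j, j \in J & z = vsval j) (z \in J').
      apply: (iffP idP) => [/memv_imgP [j hj ->]|[j hj ->]]; first by exists j; rewrite ?vlE.
      by rewrite -vlE memv_img.
    have hJ' : ideal_in mul A0 J'.
      split.
        by apply/subvP => z /J'P [j _ ->]; exact: subvsP.
      move=> x y hx /J'P [j hj ->].
      have [h1 h2] := hJ (vsproj A0 x) j (memvf _) hj.
      by split; apply/J'P; [exists (mS (vsproj A0 x) j) | exists (mS j (vsproj A0 x))];
        rewrite // mSE vK.
    case: (A0_simple J' hJ') => E; [left | right]; apply/vspaceP => w.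
      rewrite memv0; apply/idP/idP => [hw|/eqP ->]; last exact: mem0v.
      have : vsval w \in J' by apply/J'P; exists w.
      by rewrite E memv0 => /eqP h; apply/eqP; apply: subvs_inj; rewrite h linear0.
    rewrite memvf; have : vsval w \in J' by rewrite E subvsP.
    by case/J'P => j hj /subvs_inj ->.
pose lf (v : V) : 'Hom(W, K^o) := linfun (fun w : W => (B (vsval w) (p1 v) : K^o)).
have lfE v w : lf v w = B (vsval w) (p1 v).
  by apply: lfunE_gen => a u u'; rewrite linearD linearZ /= BDl BZl.
pose phi : 'Hom(V, (W * 'Hom(W, K^o))%type) := linfun (fun v => (vsproj A0 (p0 v), lf v)).
have phiE v : phi v = (vsproj A0 (p0 v), lf v).
  apply: lfunE_gen => a u u'; rewrite !linearD !linearZ /=; congr pair.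
  by apply/lfunP => w; rewrite add_lfunE scale_lfunE !lfE linearD linearZ /= BDr BZr.
have dec_u a0 a1 : a0 \in A0 -> a1 \in A1 -> p0 (a0 + a1) = a0 /\ p1 (a0 + a1) = a1.
  by move=> h0 h1; rewrite !linearD /= p0_id // p0_1 // p1_0 // p1_id // addr0 add0r.
exists W, mS, phi; split => //.
-
  have k0 : lker phi == 0%VS.
    rewrite -subv0; apply/subvP => v; rewrite memv_ker memv0 phiE => /eqP [h1 h2].
    have e0 : p0 v = 0 by rewrite -(vK _ (p0_mem v)) h1 linear0.
    have e1 : p1 v = 0.
      apply: pair1; first exact: p1_mem.
      move=> x hx; have := congr1 (fun f : 'Hom(W, K^o) => f (vsproj A0 x)) h2.
      by rewrite /= lfE zero_lfunE vK.
    by rewrite -(dec v) e0 e1 addr0.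
  have dA : (\dim A0 <= \dim A1)%N.
    pose chi : 'Hom(W, 'Hom(subvs_of A1, K^o)) :=
      linfun (fun x : W => linfun (fun a : subvs_of A1 => (B (vsval x) (vsval a) : K^o))).
    have chiE x a : chi x a = B (vsval x) (vsval a).
      rewrite /chi lfunE_gen; last first.
        move=> k u u'; apply/lfunP => a'; rewrite add_lfunE scale_lfunE !lfunE_gen;
          try (by move=> k' b b'; rewrite linearD linearZ /= BDr BZr).
        by rewrite linearD linearZ /= BDl BZl.
      by rewrite lfunE_gen // => k b b'; rewrite linearD linearZ /= BDr BZr.
    have kc : (fullv :&: lker chi = 0)%VS.
      rewrite capfv; apply/eqP; rewrite -subv0; apply/subvP => x; rewrite memv_ker memv0 => /eqP hx.
      apply/eqP; apply: subvs_inj; rewrite linear0; apply: pair0; first exact: subvsP.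
      move=> a ha; rewrite Bsym; have := congr1 (fun f : 'Hom(subvs_of A1, K^o) => f (vsproj A1 a)) hx.
      by rewrite /= chiE zero_lfunE vsprojK.
    have h1 := limg_dim_eq kc; rewrite dimvf in h1.
    have h2 := dimvS (subvf (chi @: fullv)%VS); rewrite dimvf h1 in h2.
    by move: h2; change ((\dim A0 <= \dim A1 * 1)%N -> (\dim A0 <= \dim A1)%N); rewrite muln1.
  have dV : \dim (fullv : {vspace V}) = (\dim A0 + \dim A1)%N.
    by case: hA => _ _ E _ _; rewrite -E dimv_disjoint_sum // cap01.
  have lim : limg phi = fullv.
    apply/eqP; rewrite eqEdim subvf /= dimvf.
    have kc' : (fullv :&: lker phi = 0)%VS by rewrite capfv (eqP k0).
    rewrite (limg_dim_eq kc') dV.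
    by change (\dim A0 + \dim A0 * 1 <= \dim A0 + \dim A1)%N; rewrite muln1 leq_add2l.
  exists (phi^-1)%VF; first exact: lker0_lfunK.
  by move=> y; apply: limg_lfunVK; rewrite lim memvf.
- by move=> x hx; rewrite phiE /=; apply/lfunP => w; rewrite lfE zero_lfunE p1_0 // B0r.
- by move=> x hx; rewrite phiE /= p0_1 // linear0.
- move=> x y.
  have exy : x ∙ y = p0 x ∙ p0 y + (p0 x ∙ p1 y + p1 x ∙ p0 y).
    rewrite -{1}(dec x) -{1}(dec y) !mulDl !mulDr (A11 _ _ (p1_mem x) (p1_mem y)) addr0.
    by rewrite addrA.
  have [e0 e1] := dec_u _ _ (m00 (p0_mem x) (p0_mem y))
    (memvD (m01 (p0_mem x) (p1_mem y)) (m10 (p1_mem x) (p0_mem y))).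
  rewrite -exy in e0 e1.
  rewrite !phiE /sd_mul /=; congr pair.
    by apply: subvs_inj; rewrite mSE !vK ?p0_mem.
  apply/lfunP => w; rewrite lfE lfunE_gen; last first.
    move=> k u u'; rewrite mSDl.
    have -> : mS (vsproj A0 (p0 y)) (k *: u + u') = k *: mS (vsproj A0 (p0 y)) u + mS (vsproj A0 (p0 y)) u' by rewrite mSDr.
    by rewrite !linearD !linearZ /= !lfE addrACA.
  rewrite !lfE !mSE !vK ?p0_mem // e1 BDr -Binv; congr (_ + _).
  by rewrite Bsym Binv Bsym.
Qed.

End Semiprime.

End Main.

Theorem mainTheorem18 (K : closedFieldType) (V : vectType K) (mul : V -> V -> V)
    (A0 A1 : {vspace V}) (B : V -> V -> K) :
  [pchar K] =i pred0 ->
  assoc_superalgebra mul A0 A1 ->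
  odd_symmetric mul A0 A1 B ->
  (fullv : {vspace V}) != 0%VS ->
  B_irreducible mul A0 A1 B ->
  ~ super_simple mul A0 A1 ->
  semisimple_sub mul A0 ->
  exists (W : vectType K) (mS : W -> W -> W) (phi : 'Hom(V, (W * 'Hom(W, K^o))%type)),
    [/\ simple_assoc_alg mS,
        bijective phi,
        (forall x : V, x \in A0 -> (phi x).2 = 0),
        (forall x : V, x \in A1 -> (phi x).1 = 0)
      & (forall x y : V, phi (mul x y) = sd_mul mS (phi x) (phi y))].
Proof.
move=> _ hA hB fn0 hI nss hS.
exact: (@main_sec K V mul A0 A1 B hA hB hS hI fn0 nss).
Qed.
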